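(* Let $f\colon X\to X$ be a piecewise $\lambda$-contraction and $x_0\in X$. If $\Omega(f)\cap S(f)=\emptyset$, then $f$ is asymptotically periodic on $Z(f)$.
   Context: $(X,d)$ is a compact metric space whose open balls are connected, with $\mathrm{diam}(X)>0$, and $\lambda\in(0,1)$. A piecewise $\lambda$-contraction $f$: there exist $N\in\mathbb{N}$, open connected pairwise disjoint $A_1,\dots,A_N\subset X$ with dense union $X'$, and bi-Lipschitz $\varphi_i\colon X\to X$ with Lipschitz constant $\le\lambda$, $f|_{A_i}=\varphi_i|_{A_i}$; $S(f)=X\setminus X'$. $x$ is regular of order $n$ if $f^j(x)\notin S(f)$ for $0\le j<n$, regular if for all $n$; $Z(f)$ is the set of regular points. $\mathcal{I}_n(f)$ is the set of tuples $(i_0,\dots,i_{n-1})$ such that some regular point $x$ of order $n$ has $f^j(x)\in A_{i_j}$ for $0\le j<n$. For $\alpha=(i_0,\dots,i_{n-1})$, $\varphi^\alpha=\varphi_{i_{n-1}}\circ\cdots\circ\varphi_{i_0}$ and $\Omega(f)=\bigcap_{m\ge1}\overline{\bigcup_{n\ge m}\{\varphi^\alpha(x_0):\alpha\in\mathcal{I}_n(f)\}}$. $f$ is asymptotically periodic on $Y$ if $\bigcup_{x\in Y}\omega(f,x)$ is a union of finitely many periodic orbits, where $\omega(f,x)=\bigcap_{m\ge1}\overline{\bigcup_{n\ge m}\{f^n(x)\}}$. *)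

(* Defs.v *)
From Stdlib Require Import Reals List Arith.
Open Scope R_scope.

Section Metric.
Context {X : Type} (d : X -> X -> R).

Definition is_metric : Prop :=
  (forall x y, 0 <= d x y) /\ (forall x y, d x y = 0 <-> x = y) /\
  (forall x y, d x y = d y x) /\ (forall x y z, d x z <= d x y + d y z).

Definition ball (x : X) (r : R) : X -> Prop := fun y => d x y < r.

Definition is_open (U : X -> Prop) : Prop :=
  forall x, U x -> exists r, 0 < r /\ forall y, ball x r y -> U y.

Definition closure (A : X -> Prop) : X -> Prop :=
  fun x => forall r, 0 < r -> exists y, A y /\ d x y < r.

Definition dense (A : X -> Prop) : Prop := forall x, closure A x.

Definition connected (U : X -> Prop) : Prop :=
  forall V W : X -> Prop, is_open V -> is_open W ->
    (forall x, U x -> V x \/ W x) ->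
    (exists x, U x /\ V x) -> (exists x, U x /\ W x) ->
    exists x, U x /\ V x /\ W x.

Definition compact_space : Prop :=
  forall (I : Type) (U : I -> X -> Prop), (forall i, is_open (U i)) ->
    (forall x, exists i, U i x) ->
    exists l : list I, forall x, exists i, In i l /\ U i x.

Definition diam_pos : Prop := exists x y, 0 < d x y.

Definition bilip_contr (lam : R) (phi : X -> X) : Prop :=
  (forall x y, d (phi x) (phi y) <= lam * d x y) /\
  exists c, 0 < c /\ forall x y, c * d x y <= d (phi x) (phi y).

(* (N, A, phi) witness that f is a piecewise lam-contraction;
   the pieces are A 0, ..., A (N-1) (paper: A_1, ..., A_N). *)
Definition piecewise_contraction (lam : R) (f : X -> X) (N : nat)
  (A : nat -> X -> Prop) (phi : nat -> X -> X) : Prop :=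
  (forall i, (i < N)%nat -> is_open (A i) /\ connected (A i)) /\
  (forall i j x, (i < N)%nat -> (j < N)%nat -> i <> j -> A i x -> A j x -> False) /\
  dense (fun x => exists i, (i < N)%nat /\ A i x) /\
  (forall i, (i < N)%nat -> bilip_contr lam (phi i)) /\
  (forall i x, (i < N)%nat -> A i x -> f x = phi i x).

End Metric.

Section Dyn.
Context {X : Type} (d : X -> X -> R) (f : X -> X) (N : nat)
  (A : nat -> X -> Prop) (phi : nat -> X -> X).

Definition Xprime : X -> Prop := fun x => exists i, (i < N)%nat /\ A i x.
Definition Sf : X -> Prop := fun x => ~ Xprime x.

Definition regular_order (n : nat) (x : X) : Prop :=
  forall j, (j < n)%nat -> ~ Sf (Nat.iter j f x).
Definition Zf : X -> Prop := fun x => forall n, regular_order n x.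

(* I_n(f): admissible itineraries of length n, as lists [i_0; ...; i_{n-1}] *)
Definition In_f (n : nat) (alpha : list nat) : Prop :=
  length alpha = n /\
  exists x, regular_order n x /\
    forall j, (j < n)%nat -> (nth j alpha 0%nat < N)%nat /\ A (nth j alpha 0%nat) (Nat.iter j f x).

(* phi^alpha = phi_{i_{n-1}} o ... o phi_{i_0} *)
Definition phi_alpha (alpha : list nat) (x : X) : X :=
  fold_left (fun y i => phi i y) alpha x.

Definition Omega (x0 : X) : X -> Prop :=
  fun y => forall m : nat, closure d
    (fun z => exists n alpha, (m <= n)%nat /\ In_f n alpha /\ z = phi_alpha alpha x0) y.

Definition omega_lim (x : X) : X -> Prop :=
  fun y => forall m : nat, closure d (fun z => exists n, (m <= n)%nat /\ z = Nat.iter n f x) y.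

Definition asymptotically_periodic_on (Y : X -> Prop) : Prop :=
  exists ps : list X,
    (forall p, In p ps -> exists q, (1 <= q)%nat /\ Nat.iter q f p = p) /\
    forall y, (exists x, Y x /\ omega_lim x y) <->
              (exists p k, In p ps /\ y = Nat.iter k f p).

End Dyn.

(* Main.v *)
Require Import Defs.
From Stdlib Require Import Reals List Arith Lra Lia Classical.
Open Scope R_scope.

Section Main.
Context (X : Type) (d : X -> X -> R) (lam : R)
  (Hmetric : is_metric d) (Hcompact : compact_space d) (Hlam : 0 < lam < 1).

Lemma d_pos x y : 0 <= d x y.
Proof. destruct Hmetric as (h1&h2&h3&h4). apply h1. Qed.
Lemma d_refl x : d x x = 0.
Proof. destruct Hmetric as (h1&h2&h3&h4). apply h2. reflexivity. Qed.
Lemma d_eq x y : d x y = 0 -> x = y.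
Proof. destruct Hmetric as (h1&h2&h3&h4). apply h2. Qed.
Lemma d_sym x y : d x y = d y x.
Proof. destruct Hmetric as (h1&h2&h3&h4). apply h3. Qed.
Lemma d_tri x y z : d x z <= d x y + d y z.
Proof. destruct Hmetric as (h1&h2&h3&h4). apply h4. Qed.

Lemma pow_anti a b : (a <= b)%nat -> lam ^ b <= lam ^ a.
Proof.
  intros H. replace b with (a + (b - a))%nat by lia. rewrite pow_add.
  pose proof (pow_lt lam a ltac:(lra)).
  assert (lam ^ (b - a) <= 1).
  { induction (b - a)%nat; simpl; [lra|]. pose proof (pow_lt lam n ltac:(lra)). nra. }
  nra.
Qed.

Lemma pow_small eps : 0 < eps -> exists n0, forall n, (n0 <= n)%nat -> lam ^ n < eps.
Proof.
  intros He. destruct (pow_lt_1_zero lam ltac:(rewrite Rabs_pos_eq; lra) eps He) as [n0 Hn].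
  exists n0. intros n Hn'. specialize (Hn n Hn'). rewrite Rabs_pos_eq in Hn; auto.
  apply pow_le; lra.
Qed.

Lemma fold_max_ge (l : list nat) i : In i l -> (i <= fold_right max 0 l)%nat.
Proof. induction l; simpl; intros H; [contradiction|]. destruct H; subst; [lia|].
  specialize (IHl H); lia. Qed.

Lemma compact_nat (P : nat -> X -> Prop) :
  (forall k k' x, (k <= k')%nat -> P k x -> P k' x) ->
  (forall x, exists k rho, 0 < rho /\ forall y, d x y < rho -> P k y) ->
  exists K, forall y, P K y.
Proof.
  intros Hmono Hcov.
  destruct (Hcompact nat (fun k x => exists rho, 0 < rho /\ forall y, d x y < rho -> P k y)) as [l Hl].
  - intros k x [rho [Hr H]]. exists (rho/2). split; [lra|].
    intros y Hy. exists (rho/2). split; [lra|]. intros z Hz. apply H.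
    unfold ball in Hy. pose proof (d_tri x y z). lra.
  - intros x. destruct (Hcov x) as [k [rho [Hr H]]]. exists k, rho; auto.
  - exists (fold_right max 0%nat l). intros y.
    destruct (Hl y) as [i [Hi [rho [Hr H]]]].
    apply Hmono with i. { apply fold_max_ge; auto. }
    apply H. rewrite d_refl; auto.
Qed.

Lemma cluster (s : nat -> X) : exists q, forall eps, 0 < eps -> forall K, exists j, (K <= j)%nat /\ d q (s j) < eps.
Proof.
  apply NNPP; intro Hn.
  assert (Hx : forall x, exists eps K, 0 < eps /\ forall j, (K <= j)%nat -> eps <= d x (s j)).
  { intro x. apply NNPP; intro H1. apply Hn. exists x. intros eps He K.
    apply NNPP; intro H2. apply H1. exists eps, K. split; auto. intros j Hj.
    apply Rnot_lt_le. intro H3. apply H2. eauto. }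
  destruct (compact_nat (fun k y => forall j, (k <= j)%nat -> lam ^ k <= d y (s j))) as [K HK].
  - intros k k' y Hk H j Hj. eapply Rle_trans; [apply pow_anti; eauto | apply H; lia].
  - intros x. destruct (Hx x) as [eps [K [He H]]].
    destruct (pow_small (eps/2)) as [n0 Hn0]; [lra|].
    exists (max K n0), (eps/2). split; [lra|]. intros y Hy j Hj.
    specialize (H j ltac:(lia)). specialize (Hn0 (max K n0) ltac:(lia)).
    pose proof (d_tri x y (s j)). lra.
  - specialize (HK (s K) K (le_n _)). rewrite d_refl in HK. pose proof (pow_lt lam K ltac:(lra)). lra.
Qed.

Lemma totally_bounded eps : 0 < eps -> exists l : list X, forall x, exists c, In c l /\ d c x < eps.
Proof.
  intros He. destruct (Hcompact X (fun c => ball d c eps)) as [l Hl].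
  - intros c y Hy. exists (eps - d c y). unfold ball in *. split; [lra|]. intros z Hz.
    unfold ball in *. pose proof (d_tri c y z). lra.
  - intros x. exists x. unfold ball. rewrite d_refl. auto.
  - exists l. exact Hl.
Qed.

Lemma bounded x0 : exists D, forall x, d x x0 <= D.
Proof.
  destruct (compact_nat (fun k y => d x0 y * lam ^ k < 1)) as [K HK].
  - intros k k' y Hk H. pose proof (pow_anti k k' Hk). pose proof (d_pos x0 y).
    pose proof (pow_lt lam k' ltac:(lra)). nra.
  - intros x. destruct (pow_small (/ (d x0 x + 2))) as [n0 Hn0].
    { apply Rinv_0_lt_compat. pose proof (d_pos x0 x). lra. }
    exists n0, 1. split; [lra|]. intros y Hy. specialize (Hn0 n0 (le_n _)).
    pose proof (d_tri x0 x y). pose proof (d_pos x0 x). pose proof (pow_lt lam n0 ltac:(lra)).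
    assert (lam ^ n0 * (d x0 x + 2) < 1).
    { apply (Rmult_lt_compat_r (d x0 x + 2)) in Hn0; [|lra].
      rewrite Rinv_l in Hn0; lra. }
    nra.
  - exists (/ lam ^ K). intros x. specialize (HK x). pose proof (pow_lt lam K ltac:(lra)).
    rewrite d_sym. apply (Rmult_le_reg_r (lam ^ K)); auto.
    rewrite Rinv_l; lra.
Qed.

Context (f : X -> X) (N : nat) (A : nat -> X -> Prop) (phi : nat -> X -> X)
  (Hpw : piecewise_contraction d lam f N A phi) (x0 : X)
  (HOmega : forall y, Omega d f N A phi x0 y -> Sf N A y -> False).

Notation Om := (Omega d f N A phi x0).
Definition Lv m z := exists n alpha, (m <= n)%nat /\ In_f f N A n alpha /\ z = phi_alpha phi alpha x0.

Lemma Hbil i x y : (i < N)%nat -> d (phi i x) (phi i y) <= lam * d x y.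
Proof. intros Hi. destruct Hpw as (_&_&_&H&_). apply (H i Hi). Qed.
Lemma Hfeq i x : (i < N)%nat -> A i x -> f x = phi i x.
Proof. intros Hi Hx. destruct Hpw as (_&_&_&_&H). apply H; auto. Qed.
Lemma Hopen i : (i < N)%nat -> is_open d (A i).
Proof. intros Hi. destruct Hpw as (H&_). apply H; auto. Qed.

Lemma phi_contr al : forall x y, (forall j, (j < length al)%nat -> (nth j al 0 < N)%nat) ->
  d (phi_alpha phi al x) (phi_alpha phi al y) <= lam ^ (length al) * d x y.
Proof.
  induction al as [|i al IH]; intros x y H.
  - simpl. lra.
  - change (phi_alpha phi (i :: al) x) with (phi_alpha phi al (phi i x)).
    change (phi_alpha phi (i :: al) y) with (phi_alpha phi al (phi i y)).
    assert (Hi : (i < N)%nat) by (apply (H 0%nat); simpl; lia).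
    eapply Rle_trans; [apply IH|].
    { intros j Hj. apply (H (S j)). simpl; lia. }
    cbn [length pow]. pose proof (Hbil i x y Hi). pose proof (pow_lt lam (length al) ltac:(lra)).
    nra.
Qed.

Lemma iter_phi al : forall x, (forall j, (j < length al)%nat -> (nth j al 0 < N)%nat /\ A (nth j al 0%nat) (Nat.iter j f x)) ->
  Nat.iter (length al) f x = phi_alpha phi al x.
Proof.
  induction al as [|i al IH]; intros x H; [reflexivity|].
  cbn [length]. rewrite Nat.iter_succ_r.
  transitivity (phi_alpha phi al (phi i x)); [|reflexivity].
  destruct (H 0%nat) as [h1 h2]; [simpl; lia|]. cbn [nth Nat.iter] in h1, h2.
  assert (Hfx : f x = phi i x) by (apply Hfeq; auto).
  rewrite Hfx. apply IH. intros j Hj.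
  destruct (H (S j)) as [a b]; [simpl; lia|].
  rewrite Nat.iter_succ_r, Hfx in b. cbn [nth] in a, b. auto.
Qed.

Lemma Omega_closed x : ~ Om x -> exists rho, 0 < rho /\ forall y, d x y < rho -> ~ Om y.
Proof.
  intros Hx. apply not_all_ex_not in Hx. destruct Hx as [m Hm].
  unfold closure in Hm.
  apply not_all_ex_not in Hm. destruct Hm as [r0 Hr0].
  apply imply_to_and in Hr0. destruct Hr0 as [Hr0 Hn].
  exists (r0/2). split; [lra|]. intros y Hy Hoy.
  destruct (Hoy m (r0/2)) as [z [Hz Hyz]]; [lra|].
  apply Hn. exists z. split; auto. pose proof (d_tri x y z). lra.
Qed.

Lemma lebesgue : exists r, 0 < r /\ forall y, Om y -> exists i, (i < N)%nat /\ forall z, d y z < r -> A i z.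
Proof.
  destruct (compact_nat (fun k y => Om y -> exists i, (i < N)%nat /\ forall z, d y z < lam ^ k -> A i z)) as [K HK].
  - intros k k' y Hk H Hy. destruct (H Hy) as [i [Hi H2]]. exists i. split; auto.
    intros z Hz. apply H2. pose proof (pow_anti k k' Hk). lra.
  - intros x. destruct (classic (Om x)) as [Hx|Hx].
    + assert (Hp : ~ ~ Xprime N A x) by (intro H; apply (HOmega x Hx); exact H).
      apply NNPP in Hp. destruct Hp as [i [Hi HA]].
      destruct (Hopen i Hi x HA) as [rho [Hrho Hb]].
      destruct (pow_small (rho/2)) as [k Hk]; [lra|].
      exists k, (rho/2). split; [lra|]. intros y Hy _. exists i. split; auto.
      intros z Hz. apply Hb. unfold ball. specialize (Hk k (le_n _)).
      pose proof (d_tri x y z). lra.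
    + destruct (Omega_closed x Hx) as [rho [Hrho Hb]].
      exists 0%nat, rho. split; auto. intros y Hy Hoy. exfalso. exact (Hb y Hy Hoy).
  - exists (lam ^ K). split; [apply pow_lt; lra|]. exact HK.
Qed.

Section WithR.
Context (r : R) (Hr : 0 < r) (Hleb : forall y, Om y -> exists i, (i < N)%nat /\ forall z, d y z < r -> A i z)
  (D : R) (HD : forall x, d x x0 <= D).

Lemma f_Omega y : Om y -> Om (f y).
Proof.
  intros Hy. destruct (Hleb y Hy) as [i [HiN Hi]].
  assert (Hfy : f y = phi i y) by (apply Hfeq; auto; apply Hi; rewrite d_refl; lra).
  assert (HD0 : 0 <= D) by (pose proof (HD x0); rewrite d_refl in *; lra).
  intros m eps He.
  destruct (pow_small (r / (2 * (D + 1)))) as [n0 Hn0].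
  { apply Rdiv_lt_0_compat; lra. }
  destruct (Hy (max m n0) (Rmin (r/2) eps)) as [z' [[n' [al [Hn' [[Hlen [x [Hreg Hit]]] Hz']]]] Hyz']].
  { apply Rmin_pos; lra. }
  assert (Hfx : Nat.iter n' f x = phi_alpha phi al x).
  { rewrite <- Hlen. apply iter_phi. intros j Hj. apply Hit. lia. }
  assert (Hc : d (phi_alpha phi al x) (phi_alpha phi al x0) <= lam ^ n' * d x x0).
  { rewrite <- Hlen. apply phi_contr. intros j Hj. apply Hit. lia. }
  specialize (Hn0 n' ltac:(lia)).
  assert (Hsmall : lam ^ n' * d x x0 < r / 2).
  { pose proof (HD x). pose proof (d_pos x x0). pose proof (pow_lt lam n' ltac:(lra)).
    assert (lam ^ n' * (D + 1) < r / 2).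
    { apply (Rmult_lt_compat_r (D + 1)) in Hn0; [|lra].
      replace (r / (2 * (D + 1)) * (D + 1)) with (r / 2) in Hn0 by (field; lra). lra. }
    nra. }
  pose proof (Rmin_l (r/2) eps). pose proof (Rmin_r (r/2) eps).
  assert (HA : A i (Nat.iter n' f x)).
  { apply Hi. rewrite Hfx. pose proof (d_tri y z' (phi_alpha phi al x)).
    rewrite (d_sym z' (phi_alpha phi al x)) in H1. subst z'. lra. }
  exists (phi i z'). split.
  - exists (S n'), (al ++ i :: nil). split; [lia|]. split.
    + split. { rewrite length_app; simpl; lia. }
      exists x. split.
      * intros j Hj. destruct (Nat.eq_dec j n') as [->|Hne].
        -- intro HS. apply HS. exists i; auto.
        -- apply Hreg; lia.
      * intros j Hj. destruct (Nat.eq_dec j n') as [->|Hne].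
        -- rewrite app_nth2 by lia. rewrite Hlen, Nat.sub_diag. simpl. auto.
        -- rewrite app_nth1 by lia. apply Hit. lia.
    + unfold phi_alpha. rewrite fold_left_app. simpl. subst z'. reflexivity.
  - rewrite Hfy. pose proof (Hbil i y z' HiN). pose proof (d_pos y z'). nra.
Qed.

Lemma step y z : Om y -> d y z < r -> exists i, (i < N)%nat /\ f y = phi i y /\ f z = phi i z.
Proof.
  intros Hy Hyz. destruct (Hleb y Hy) as [i [HiN Hi]]. exists i. split; auto. split.
  - apply Hfeq; auto. apply Hi. rewrite d_refl; lra.
  - apply Hfeq; auto.
Qed.

Lemma track j : forall y z, Om y -> d y z < r ->
  d (Nat.iter j f y) (Nat.iter j f z) <= lam ^ j * d y z /\ Om (Nat.iter j f y).
Proof.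
  induction j; intros y z Hy Hyz.
  - simpl. split; [lra|auto].
  - destruct (step y z Hy Hyz) as [i [HiN [E1 E2]]].
    assert (Hd : d (f y) (f z) <= lam * d y z) by (rewrite E1, E2; apply Hbil; auto).
    pose proof (d_pos y z).
    destruct (IHj (f y) (f z) (f_Omega y Hy)) as [H1 H2]. { nra. }
    rewrite !Nat.iter_succ_r. split; auto. cbn [pow].
    pose proof (pow_lt lam j ltac:(lra)). nra.
Qed.

End WithR.

Lemma pow_small_mul C eps : 0 <= C -> 0 < eps -> exists n0, forall n, (n0 <= n)%nat -> lam ^ n * C < eps.
Proof.
  intros HC He. destruct (pow_small (eps / (C + 1))) as [n0 Hn0].
  { apply Rdiv_lt_0_compat; lra. }
  exists n0. intros n Hn. specialize (Hn0 n Hn). pose proof (pow_lt lam n ltac:(lra)).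
  assert (lam ^ n * (C + 1) < eps).
  { apply (Rmult_lt_compat_r (C + 1)) in Hn0; [|lra].
    replace (eps / (C + 1) * (C + 1)) with eps in Hn0 by (field; lra). lra. }
  nra.
Qed.

Lemma itinerary x : Zf f N A x -> forall n, exists al, length al = n /\
  forall j, (j < n)%nat -> (nth j al 0 < N)%nat /\ A (nth j al 0%nat) (Nat.iter j f x).
Proof.
  intros Hx n. induction n as [|n [al [Hl H]]].
  - exists nil. split; auto. intros; lia.
  - assert (Hp : Xprime N A (Nat.iter n f x)).
    { apply NNPP; intro Hn. apply (Hx (S n) n ltac:(lia)). exact Hn. }
    destruct Hp as [i [Hi HA]]. exists (al ++ i :: nil). split; [rewrite length_app; simpl; lia|].
    intros j Hj. destruct (Nat.eq_dec j n) as [->|Hne].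
    + rewrite app_nth2 by lia. rewrite Hl, Nat.sub_diag. simpl. auto.
    + rewrite app_nth1 by lia. apply H. lia.
Qed.

Lemma Omega_cluster x : Zf f N A x -> exists y, Om y /\
  forall eps, 0 < eps -> forall K, exists n, (K <= n)%nat /\ d y (Nat.iter n f x) < eps.
Proof.
  intros Hx. destruct (cluster (fun n => Nat.iter n f x)) as [y Hy]. exists y. split; auto.
  intros m eps He.
  destruct (pow_small_mul (d x x0) (eps/2)) as [n0 Hn0]; [apply d_pos|lra|].
  destruct (Hy (eps/2) ltac:(lra) (max m n0)) as [n [Hn Hd]]. cbv beta in Hd.
  destruct (itinerary x Hx n) as [al [Hl Hal]].
  exists (phi_alpha phi al x0). split.
  - exists n, al. split; [lia|]. split; auto. split; auto. exists x. split; [apply Hx|]. exact Hal.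
  - assert (Hfx : Nat.iter n f x = phi_alpha phi al x).
    { rewrite <- Hl. apply iter_phi. intros j Hj. apply Hal. lia. }
    assert (Hc : d (phi_alpha phi al x) (phi_alpha phi al x0) <= lam ^ n * d x x0).
    { rewrite <- Hl. apply phi_contr. intros j Hj. apply Hal. lia. }
    specialize (Hn0 n ltac:(lia)).
    pose proof (d_tri y (Nat.iter n f x) (phi_alpha phi al x0)). rewrite Hfx in *. lra.
Qed.

Lemma per_mul q p : Nat.iter p f q = q -> forall k, Nat.iter (k * p) f q = q.
Proof.
  intros Hp k. induction k; [reflexivity|].
  replace (S k * p)%nat with (p + k * p)%nat by lia. rewrite Nat.iter_add, IHk. auto.
Qed.

Lemma per_mod q p : (1 <= p)%nat -> Nat.iter p f q = q -> forall t, Nat.iter t f q = Nat.iter (t mod p) f q.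
Proof.
  intros H1 Hp t. transitivity (Nat.iter (t mod p + (t / p) * p) f q).
  { f_equal. pose proof (Nat.div_mod_eq t p). lia. }
  rewrite Nat.iter_add, per_mul; auto.
Qed.

Lemma finite_min (g : nat -> R) p : (forall k, (k < p)%nat -> 0 < g k) ->
  exists del, 0 < del /\ forall k, (k < p)%nat -> del <= g k.
Proof.
  induction p; intros H.
  - exists 1. split; [lra|]. intros; lia.
  - destruct IHp as [del [Hd H2]]. { intros k Hk. apply H. lia. }
    exists (Rmin del (g p)). split. { apply Rmin_pos; auto. }
    intros k Hk. destruct (Nat.eq_dec k p) as [->|Hne]. { apply Rmin_r. }
    eapply Rle_trans; [apply Rmin_l|]. apply H2. lia.
Qed.

Section WithR.
Context (r : R) (Hr : 0 < r) (Hleb : forall y, Om y -> exists i, (i < N)%nat /\ forall z, d y z < r -> A i z)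
  (D : R) (HD : forall x, d x x0 <= D).

Let track' := track r Hr Hleb D HD.

Lemma key x : Zf f N A x -> exists q p, Om q /\ (1 <= p)%nat /\ Nat.iter p f q = q /\
   forall w, omega_lim d f x w <-> exists k, w = Nat.iter k f q.
Proof.
  intros Hx.
  destruct (Omega_cluster x Hx) as [y [Hy Hyc]].
  destruct (Hyc r Hr 0%nat) as [n0 [_ Hn0]].
  destruct (cluster (fun j => Nat.iter j f y)) as [q0 Hq0].
  set (e' := (1 - lam) * r / 2).
  assert (He' : 0 < e') by (unfold e'; nra).
  destruct (Hq0 e' He' 0%nat) as [j1 [_ Hj1]].
  destruct (Hq0 e' He' (S j1)) as [j2 [Hj12 Hj2]]. cbv beta in Hj1, Hj2.
  set (c := Nat.iter j1 f y). set (p := (j2 - j1)%nat).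
  assert (Hp1 : (1 <= p)%nat) by (unfold p; lia).
  assert (Hfc : Nat.iter p f c = Nat.iter j2 f y).
  { unfold c. rewrite <- Nat.iter_add. f_equal. unfold p; lia. }
  set (del := d c (Nat.iter p f c)).
  assert (Hdel : del < (1 - lam) * r).
  { unfold del. rewrite Hfc. pose proof (d_tri c q0 (Nat.iter j2 f y)).
    unfold c in *. rewrite d_sym in Hj1. unfold e' in *. lra. }
  assert (Hdel0 : 0 <= del) by apply d_pos.
  assert (Hyy : d y y < r) by (rewrite d_refl; lra).
  assert (Hc : Om c) by (apply (track' j1 y y Hy Hyy)).
  set (B := del / (1 - lam)).
  assert (HBr : B < r).
  { unfold B. apply (Rmult_lt_reg_r (1 - lam)); [lra|].
    replace (del / (1 - lam) * (1 - lam)) with del by (field; lra). lra. }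
  assert (HB0 : 0 <= B) by (unfold B, Rdiv; apply Rmult_le_pos; [lra| left; apply Rinv_0_lt_compat; lra]).
  assert (HBeq : del + lam * B = B) by (unfold B; field; lra).
  assert (Hlp : lam ^ p <= lam).
  { pose proof (pow_anti 1 p Hp1). simpl in H. lra. }
  assert (Hbound : forall k, d c (Nat.iter (k * p) f c) <= B).
  { induction k.
    - simpl. rewrite d_refl. lra.
    - replace (S k * p)%nat with (p + k * p)%nat by lia. rewrite Nat.iter_add.
      pose proof (d_tri c (Nat.iter p f c) (Nat.iter p f (Nat.iter (k * p) f c))).
      destruct (track' p c (Nat.iter (k * p) f c) Hc ltac:(lra)) as [H1 _].
      pose proof (d_pos c (Nat.iter (k * p) f c)).
      pose proof (pow_lt lam p ltac:(lra)).
      fold del in H. nra. }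
  set (s := fun k => Nat.iter (k * p) f c).
  assert (Hs_om : forall k, Om (s k)).
  { intro k. apply (track' (k * p) c c Hc). rewrite d_refl; lra. }
  assert (Hs_step : forall k, d (s k) (s (S k)) <= lam ^ k * del).
  { intro k. unfold s. replace (S k * p)%nat with (k * p + p)%nat by lia.
    rewrite Nat.iter_add.
    destruct (track' (k * p) c (Nat.iter p f c) Hc ltac:(fold del; nra)) as [H1 _].
    fold del in H1. pose proof (pow_anti k (k * p) ltac:(nia)). nra. }
  assert (HsS : forall k, s (S k) = Nat.iter p f (s k)).
  { intro k. unfold s. replace (S k * p)%nat with (p + k * p)%nat by lia. apply Nat.iter_add. }
  destruct (cluster s) as [q Hq].
  assert (Hoq : Om q).
  { intros m eps He. destruct (Hq (eps/2) ltac:(lra) 0%nat) as [k [_ Hk]].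
    destruct (Hs_om k m (eps/2) ltac:(lra)) as [z [Hz Hkz]].
    exists z. split; auto. pose proof (d_tri q (s k) z). lra. }
  assert (Hcq : d c q < r).
  { destruct (Hq ((r - B)/2) ltac:(lra) 0%nat) as [k [_ Hk]].
    pose proof (d_tri c (s k) q). pose proof (Hbound k). fold (s k) in H0.
    rewrite (d_sym (s k) q) in H. lra. }
  assert (Hqp : Nat.iter p f q = q).
  { apply d_eq. destruct (Rle_lt_or_eq_dec 0 (d (Nat.iter p f q) q) (d_pos _ _)) as [Hlt|Heq]; [|auto].
    exfalso. set (e := d (Nat.iter p f q) q) in *.
    destruct (pow_small_mul del (e/4) Hdel0 ltac:(lra)) as [k0 Hk0].
    destruct (Hq (Rmin (e/4) r) ltac:(apply Rmin_pos; lra) k0) as [k [Hkk Hk]].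
    pose proof (Rmin_l (e/4) r) as Hm1. pose proof (Rmin_r (e/4) r) as Hm2.
    destruct (track' p q (s k) Hoq ltac:(lra)) as [H1 _].
    pose proof (Hs_step k) as Hst. specialize (Hk0 k Hkk).
    rewrite <- HsS in H1.
    pose proof (d_tri q (s k) (s (S k))) as T1.
    pose proof (d_tri (Nat.iter p f q) (s (S k)) q) as T2.
    pose proof (d_pos q (s k)) as P1. pose proof (pow_lt lam p ltac:(lra)) as P2.
    assert (Hlq : lam ^ p * d q (s k) <= d q (s k)).
    { pose proof (pow_anti 0 p ltac:(lia)) as P3. simpl in P3. nra. }
    rewrite (d_sym (s (S k)) q) in T2.
    unfold e in *. lra. }
  set (M := (n0 + j1)%nat).
  assert (Htr : forall t, d (Nat.iter t f q) (Nat.iter (M + t) f x) <= lam ^ t * (2 * r)).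
  { intro t.
    destruct (track' t q c Hoq ltac:(rewrite d_sym; lra)) as [H1 _].
    destruct (track' (j1 + t) y (Nat.iter n0 f x) Hy Hn0) as [H2 _].
    assert (E1 : Nat.iter t f c = Nat.iter (j1 + t) f y).
    { unfold c. rewrite <- Nat.iter_add. f_equal. lia. }
    assert (E2 : Nat.iter (M + t) f x = Nat.iter (j1 + t) f (Nat.iter n0 f x)).
    { rewrite <- Nat.iter_add. f_equal. unfold M. lia. }
    pose proof (d_tri (Nat.iter t f q) (Nat.iter t f c) (Nat.iter (M + t) f x)).
    rewrite E1, E2 in *.
    pose proof (pow_anti t (j1 + t) ltac:(lia)).
    pose proof (pow_lt lam t ltac:(lra)).
    pose proof (d_pos y (Nat.iter n0 f x)). pose proof (d_pos q c).
    rewrite (d_sym c q) in Hcq. nra. }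
  exists q, p. split; [auto|]. split; [auto|]. split; [auto|].
  intros w. split.
  - intros Hw. apply NNPP. intro Hn.
    destruct (finite_min (fun k => d w (Nat.iter k f q)) p) as [dl [Hdl Hdlk]].
    { intros k Hk. destruct (Rle_lt_or_eq_dec 0 _ (d_pos w (Nat.iter k f q))) as [h|h]; auto.
      exfalso. apply Hn. exists k. apply d_eq. auto. }
    destruct (pow_small_mul (2 * r) (dl/2) ltac:(lra) ltac:(lra)) as [T HT].
    destruct (Hw (M + T)%nat (dl/2) ltac:(lra)) as [z [[n [Hn1 ->]] Hwz]].
    set (t := (n - M)%nat).
    replace n with (M + t)%nat in * by (unfold t; lia).
    specialize (HT t ltac:(lia)). specialize (Htr t).
    rewrite (per_mod q p Hp1 Hqp t) in Htr.
    assert (Hm : (t mod p < p)%nat) by (apply Nat.mod_upper_bound; lia).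
    specialize (Hdlk _ Hm). cbv beta in Hdlk.
    pose proof (d_tri w (Nat.iter (M + t) f x) (Nat.iter (t mod p) f q)).
    rewrite (d_sym (Nat.iter (M + t) f x)) in H. lra.
  - intros [k ->] m eps He.
    destruct (pow_small_mul (2 * r) eps ltac:(lra) He) as [T HT].
    set (t := (k + (m + T) * p)%nat).
    exists (Nat.iter (M + t) f x). split.
    + exists (M + t)%nat. split; auto. unfold t. nia.
    + specialize (Htr t). specialize (HT t ltac:(unfold t; nia)).
      assert (Nat.iter t f q = Nat.iter k f q).
      { unfold t. rewrite Nat.iter_add, per_mul; auto. }
      rewrite H in Htr. lra.
Qed.


Lemma per_unique q1 q2 : Om q1 -> (exists p, (1 <= p)%nat /\ Nat.iter p f q1 = q1) ->
  (exists p, (1 <= p)%nat /\ Nat.iter p f q2 = q2) -> d q1 q2 < r -> q1 = q2.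
Proof.
  intros Ho [p1 [Hp1 E1]] [p2 [Hp2 E2]] Hd.
  destruct (track' (p2 * p1) q1 q2 Ho Hd) as [H _].
  rewrite (per_mul q1 p1 E1 p2) in H.
  rewrite Nat.mul_comm, (per_mul q2 p2 E2 p1) in H.
  pose proof (pow_anti 1 (p1 * p2) ltac:(nia)) as P. simpl in P.
  pose proof (d_pos q1 q2). apply d_eq. nra.
Qed.

Definition Good q := Om q /\ (exists p, (1 <= p)%nat /\ Nat.iter p f q = q) /\
  exists x, Zf f N A x /\ forall w, omega_lim d f x w <-> exists k, w = Nat.iter k f q.

Lemma build_list (l : list X) : exists ps, (forall p, In p ps -> Good p) /\
  forall q, Good q -> (exists c, In c l /\ d c q < r / 2) -> In q ps.
Proof.
  induction l as [|c l [ps [H1 H2]]].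
  - exists nil. split; [intros p []|]. intros q _ [c [[] _]].
  - destruct (classic (exists q, Good q /\ d c q < r / 2)) as [[q0 [G0 D0]]|Hn].
    + exists (q0 :: ps). split.
      * intros p [<-|Hp]; auto.
      * intros q Gq [c' [[<-|Hc'] Hd]].
        -- left. apply per_unique; try apply G0; try apply Gq.
           pose proof (d_tri q0 c q). rewrite (d_sym q0 c) in H. lra.
        -- right. apply H2; eauto.
    + exists ps. split; auto.
      intros q Gq [c' [[<-|Hc'] Hd]].
      * exfalso. apply Hn. eauto.
      * apply H2; eauto.
Qed.

Lemma final : asymptotically_periodic_on d f (Zf f N A).
Proof.
  destruct (totally_bounded (r/2) ltac:(lra)) as [l Hl].
  destruct (build_list l) as [ps [H1 H2]].
  exists ps. split.
  - intros p Hp. apply H1 in Hp. destruct Hp as (_&Hp&_). exact Hp.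
  - intros w. split.
    + intros [x [Hx Hw]].
      destruct (key x Hx) as [q [p [Hoq [Hp [Hqp Hiff]]]]].
      assert (Gq : Good q).
      { split; [auto|]. split; [eauto|]. exists x. split; auto. }
      apply Hiff in Hw. destruct Hw as [k ->].
      exists q, k. split; [|reflexivity]. apply H2; auto.
    + intros [p [k [Hin ->]]].
      destruct (H1 p Hin) as (_&_&x&Hx&Hiff).
      exists x. split; auto. apply Hiff. eauto.
Qed.

End WithR.
End Main.

Theorem lemma3p7 (X : Type) (d : X -> X -> R) (lam : R)
  (Hmetric : is_metric d) (Hcompact : compact_space d)
  (Hballs : forall x r, 0 < r -> connected d (ball d x r))
  (Hdiam : diam_pos d) (Hlam : 0 < lam < 1)
  (f : X -> X) (N : nat) (A : nat -> X -> Prop) (phi : nat -> X -> X)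
  (Hpw : piecewise_contraction d lam f N A phi) (x0 : X)
  (HOmega : forall y, Omega d f N A phi x0 y -> Sf N A y -> False) :
  asymptotically_periodic_on d f (Zf f N A).
Proof.
  destruct (lebesgue X d lam Hmetric Hcompact Hlam f N A phi Hpw x0 HOmega) as [r [Hr Hleb]].
  destruct (bounded X d lam Hmetric Hcompact Hlam x0) as [D HD].
  eapply (final X d lam); eassumption.
Qed.
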